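(* Let $(X,\mathcal{F})$ be a measurable Hilbert lamination and let $f_n:X\to X$ be a sequence of MT-maps (measurable, leafwise continuous, mapping leaves into leaves) such that $(f_n(x))$ converges (in the leaf topology) for every $x\in X$. Then $\lim_nf_n$ is measurable.
   Context: A measurable Hilbert lamination is an MT-space (set with $\sigma$-algebra and topology) $X$ covered by countably many measurable open sets with MT-isomorphisms (measurable homeomorphisms with measurable inverse) onto $B\times T$, where $B$ is an open ball in a separable Hilbert space and $T$ a standard Borel space, $B\times T$ carrying the product of the norm topology on $B$ and the discrete topology on $T$ and the product $\sigma$-algebra; leaves are the connected components. *)

(* Defs.v *)
From HB Require Import structures.
From mathcomp Require Import all_boot all_order all_algebra.
From mathcomp Require Import all_classical all_reals.
From mathcomp Require Import topology normedtype measure.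
Set Implicit Arguments. Unset Strict Implicit. Unset Printing Implicit Defensive.
Import Order.TTheory GRing.Theory Num.Theory.
Import numFieldNormedType.Exports.
Local Open Scope classical_set_scope.
Local Open Scope ring_scope.

Definition is_topology (X : Type) (OX : set (set X)) : Prop :=
  [/\ OX set0, OX setT,
      (forall F : set (set X), F `<=` OX -> OX (\bigcup_(A in F) A)) &
      (forall A B, OX A -> OX B -> OX (A `&` B))].

Definition MTspace (X : Type) (MX OX : set (set X)) : Prop :=
  sigma_algebra setT MX /\ is_topology OX.

Definition is_metric (R : realType) (T : Type) (d : T -> T -> R) : Prop :=
  [/\ (forall x y, 0 <= d x y), (forall x y, d x y = 0 <-> x = y),
      (forall x y, d x y = d y x) &
      (forall x y z, d x z <= d x y + d y z)].

Definition metric_complete (R : realType) (T : Type) (d : T -> T -> R) : Prop :=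
  forall u : nat -> T,
    (forall e : R, 0 < e -> exists N, forall m n, (N <= m)%N -> (N <= n)%N ->
        d (u m) (u n) < e) ->
    exists l, forall e : R, 0 < e -> exists N, forall n, (N <= n)%N -> d (u n) l < e.

Definition metric_separable (R : realType) (T : Type) (d : T -> T -> R) : Prop :=
  exists D : set T, countable D /\
    forall x (e : R), 0 < e -> exists y, D y /\ d x y < e.

Definition metric_open (R : realType) (T : Type) (d : T -> T -> R) : set (set T) :=
  [set O | forall x, O x -> exists2 e : R, 0 < e & forall y, d x y < e -> O y].

Definition standard_Borel (R : realType) (T : Type) (ST : set (set T)) : Prop :=
  exists d : T -> T -> R,
    [/\ is_metric d, metric_complete d, metric_separable d &
        ST = <<s setT, metric_open d >>].

Definition is_inner_product (R : realType) (H : completeNormedModType R)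
    (ip : H -> H -> R) : Prop :=
  [/\ (forall x y, ip x y = ip y x),
      (forall (a : R) (x y z : H), ip (a *: x + y) z = a * ip x z + ip y z) &
      (forall x : H, `|x| ^+ 2 = ip x x)].

Definition separable_space (T : topologicalType) : Prop :=
  exists D : set T, countable D /\ dense D.

Definition oball (R : realType) (H : completeNormedModType R) (c : H) (r : R) : set H :=
  [set y | `|y - c| < r].

(* open sets of B x T: product of the norm topology on B and the discrete
   topology on T *)
Definition model_open (R : realType) (H : completeNormedModType R) (T : Type)
    (B : set H) : set (set (H * T)) :=
  [set W | W `<=` B `*` setT /\
     forall p, W p -> exists O : set H,
       [/\ open O, O p.1, O `<=` B & forall y, O y -> W (y, p.2)]].

Definition borel_on (R : realType) (H : completeNormedModType R) (B : set H) :
  set (set H) := <<s B, [set O | open O /\ O `<=` B] >>.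

Definition model_meas (R : realType) (H : completeNormedModType R) (T : Type)
    (B : set H) (ST : set (set T)) : set (set (H * T)) :=
  <<s B `*` setT, [set A `*` S | A in borel_on B & S in ST] >>.

(* an MT-isomorphism from the measurable open set U of (X,MX,OX) onto
   B x T, B an open ball of a separable Hilbert space, T standard Borel *)
Record hilbert_chart (R : realType) (X : Type) (MX OX : set (set X)) := HChart {
  hc_H : completeNormedModType R;
  hc_ip : hc_H -> hc_H -> R;
  hc_ipP : is_inner_product hc_ip;
  hc_sep : separable_space hc_H;
  hc_T : Type;
  hc_ST : set (set hc_T);
  hc_stdB : standard_Borel R hc_ST;
  hc_c : hc_H;
  hc_r : R;
  hc_r_gt0 : 0 < hc_r;
  hc_U : set X;
  hc_U_meas : MX hc_U;
  hc_U_open : OX hc_U;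
  hc_phi : X -> hc_H * hc_T;
  hc_psi : hc_H * hc_T -> X;
  hc_phi_into : forall x, hc_U x -> (oball hc_c hc_r `*` setT) (hc_phi x);
  hc_psi_into : forall p, (oball hc_c hc_r `*` setT) p -> hc_U (hc_psi p);
  hc_psiK : forall x, hc_U x -> hc_psi (hc_phi x) = x;
  hc_phiK : forall p, (oball hc_c hc_r `*` setT) p -> hc_phi (hc_psi p) = p;
  hc_phi_meas : forall W, model_meas (oball hc_c hc_r) hc_ST W ->
      MX (hc_U `&` hc_phi @^-1` W);
  hc_psi_meas : forall A, MX A ->
      model_meas (oball hc_c hc_r) hc_ST ((oball hc_c hc_r `*` setT) `&` hc_psi @^-1` A);
  hc_phi_cont : forall W, model_open (oball hc_c hc_r) W ->
      OX (hc_U `&` hc_phi @^-1` W);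
  hc_psi_cont : forall A, OX A ->
      model_open (oball hc_c hc_r) ((oball hc_c hc_r `*` setT) `&` hc_psi @^-1` A)
}.

Definition measurable_hilbert_lamination (R : realType) (X : Type)
    (MX OX : set (set X)) : Prop :=
  MTspace MX OX /\
  exists ch : nat -> hilbert_chart R MX OX,
    forall x, exists i, hc_U (ch i) x.

Definition connected_in (X : Type) (OX : set (set X)) (A : set X) : Prop :=
  forall O1 O2, OX O1 -> OX O2 -> A `<=` O1 `|` O2 ->
    A `&` O1 `&` O2 = set0 -> A `&` O1 = set0 \/ A `&` O2 = set0.

(* the leaf through x: its connected component *)
Definition leaf (X : Type) (OX : set (set X)) (x : X) : set X :=
  \bigcup_(A in [set A | connected_in OX A /\ A x]) A.

Definition MT_measurable (X : Type) (MX : set (set X)) (f : X -> X) : Prop :=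
  forall A, MX A -> MX (f @^-1` A).

Definition MT_continuous (X : Type) (OX : set (set X)) (f : X -> X) : Prop :=
  forall A, OX A -> OX (f @^-1` A).

Definition MT_map (X : Type) (MX OX : set (set X)) (f : X -> X) : Prop :=
  [/\ MT_measurable MX f, MT_continuous OX f &
      forall x, f @` leaf OX x `<=` leaf OX (f x)].

Definition converges_to (X : Type) (OX : set (set X)) (u : nat -> X) (l : X) : Prop :=
  forall O, OX O -> O l -> exists N, forall n, (N <= n)%N -> O (u n).

(* Main.v *)
Require Import Defs.
From HB Require Import structures.
From mathcomp Require Import all_boot all_order all_algebra.
From mathcomp Require Import all_classical all_reals.
From mathcomp Require Import topology normedtype measure.
Set Implicit Arguments. Unset Strict Implicit. Unset Printing Implicit Defensive.
Import Order.TTheory GRing.Theory Num.Theory.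
Import numFieldNormedType.Exports.
Local Open Scope classical_set_scope.
Local Open Scope ring_scope.
From mathcomp Require Import interval_inference lra.
Import Num.Def.

Section SA.
Variables (X : Type) (MX : set (set X)).
Hypothesis hM : sigma_algebra setT MX.

Lemma M0 : MX set0. Proof. by case: hM. Qed.
Lemma MC A : MX A -> MX (~` A).
Proof. by case: hM => _ h _ /h; rewrite setTD. Qed.
Lemma MT : MX setT. Proof. by rewrite -setC0; apply: MC; apply: M0. Qed.
Lemma MU (A : nat -> set X) : (forall n, MX (A n)) -> MX (\bigcup_n A n).
Proof. by case: hM => _ _; apply. Qed.
Lemma MI (A : nat -> set X) : (forall n, MX (A n)) -> MX (\bigcap_n A n).
Proof.
move=> h; rewrite -(setCK (\bigcap_n A n)) setC_bigcap; apply: MC; apply: MU => n.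
exact: MC.
Qed.
Lemma MU2 A B : MX A -> MX B -> MX (A `|` B).
Proof.
move=> hA hB; rewrite (_ : A `|` B = \bigcup_n (if n == 0%N then A else B)).
  by apply: MU => n; case: ifP.
apply/seteqP; split => x /=.
  by case=> h; [exists 0%N | exists 1%N].
by case=> n _; case: ifP => _ h; [left|right].
Qed.
Lemma MI2 A B : MX A -> MX B -> MX (A `&` B).
Proof.
move=> hA hB; rewrite -(setCK (A `&` B)) setCI; apply: MC; apply: MU2; exact: MC.
Qed.
Lemma MD A B : MX A -> MX B -> MX (A `\` B).
Proof. by move=> hA hB; rewrite setDE; apply: MI2 => //; apply: MC. Qed.

Lemma countable_enum T (D : set T) : countable D ->
  D = set0 \/ exists e : nat -> T, D = range e.
Proof.
move=> /pfcard_geP [->|h]; first by left.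
right; have [f ->] := surjfunPex.1 h; by exists f.
Qed.

Lemma MUc T (D : set T) (P : T -> set X) : countable D ->
  (forall q, D q -> MX (P q)) -> MX (\bigcup_(q in D) P q).
Proof.
move=> /countable_enum [->|[e ->]] h; first by rewrite bigcup_set0; exact: M0.
rewrite (_ : \bigcup_(q in range e) P q = \bigcup_n P (e n)).
  by apply: MU => n; apply: h; exists n.
apply/seteqP; split => x /=.
  by case=> q [n _ <-] hx; exists n.
by case=> n _ hx; exists (e n) => //; exists n.
Qed.

Lemma MIc T (D : set T) (P : T -> set X) : countable D ->
  (forall q, D q -> MX (P q)) -> MX (\bigcap_(q in D) P q).
Proof.
move=> cD h; rewrite -(setCK (\bigcap_(q in D) P q)) setC_bigcap; apply: MC.
by apply: MUc => // q /h; apply: MC.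
Qed.

Lemma Mev (P : nat -> nat -> set X) : (forall N n, MX (P N n)) ->
  MX [set x | exists N, forall n, (N <= n)%N -> P N n x].
Proof.
move=> h; rewrite (_ : [set x | _] =
   \bigcup_N \bigcap_n (if (N <= n)%N then P N n else setT)).
  by apply: MU => N; apply: MI => n; case: ifP => _; [apply: h|apply: MT].
apply/seteqP; split => x /=.
  by case=> N hN; exists N => // n _; case: ifP => // /hN.
by case=> N _ hN; exists N => n Nn; by have := hN n I; rewrite Nn.
Qed.

Lemma Mall (P : nat -> set X) : (forall n, MX (P n)) ->
  MX [set x | forall n, P n x].
Proof.
move=> h; rewrite (_ : [set x | _] = \bigcap_n P n); first exact: MI.
by apply/seteqP; split => x /= hx n; [move=> _|]; apply: hx.
Qed.
Lemma Mex (P : nat -> set X) : (forall n, MX (P n)) ->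
  MX [set x | exists n, P n x].
Proof.
move=> h; rewrite (_ : [set x | _] = \bigcup_n P n); first exact: MU.
by apply/seteqP; split => x /= [n]; exists n.
Qed.

Lemma Mext (P Q : set X) : (forall x, P x <-> Q x) -> MX P -> MX Q.
Proof.
move=> h; rewrite (_ : Q = P) //; apply/seteqP; split => x /h //.
Qed.
Lemma Miff (P Q : set X) : MX P -> MX Q -> MX [set x | P x <-> Q x].
Proof.
move=> hP hQ; apply: (Mext (P := (P `&` Q) `|` (~` P `&` ~` Q))).
  move=> x; split.
    move=> [[a b]|[a b]]; first by split.
    by split => hh; exfalso; [apply: a|apply: b].
  by case: (pselect (P x)) => a; case: (pselect (Q x)) => b hx;
    [left|exfalso; apply: b; apply hx|exfalso; apply: a; apply hx|right].
by apply: MU2; apply: MI2 => //; apply: MC.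
Qed.
Lemma MexD T (D : set T) (P : T -> set X) : countable D ->
  (forall q, D q -> MX (P q)) -> MX [set x | exists q, D q /\ P q x].
Proof.
move=> cD h; apply: (Mext (P := \bigcup_(q in D) P q)); last exact: MUc.
by move=> x; split => [[q Dq Pq]|[q [Dq Pq]]]; exists q.
Qed.
Lemma MallD T (D : set T) (P : T -> set X) : countable D ->
  (forall q, D q -> MX (P q)) -> MX [set x | forall q, D q -> P q x].
Proof.
move=> cD h; apply: (Mext (P := \bigcap_(q in D) P q)); last exact: MIc.
by move=> x; split => hx q Dq; apply: hx.
Qed.
Lemma MAnd (P Q : X -> Prop) : MX [set x | P x] -> MX [set x | Q x] ->
  MX [set x | P x /\ Q x].
Proof. exact: MI2. Qed.
End SA.
Lemma complete_seq (R : realType) (H : completeNormedModType R) (u : nat -> H) :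
  (forall e : R, 0 < e -> exists q, exists N, forall n, (N <= n)%N -> `|q - u n| < e) ->
  exists b, forall e : R, 0 < e -> exists N, forall n, (N <= n)%N -> `|b - u n| < e.
Proof.
move=> h.
have : cauchy_ex (u @ \oo).
  move=> e /h [q [N hN]]; exists q; exists N => // n /= Nn.
  by rewrite -ball_normE /=; apply: hN.
move=> /cauchy_exP /cauchy_cvg; rewrite -/(cvgn u) => /cvg_ex [l hl].
exists l => e e0.
move: hl => /cvgr_dist_lt /(_ e e0) [N _ hN].
by exists N => n Nn; apply: hN.
Qed.
Lemma exists_inv (R : realType) (e : R) : 0 < e -> exists j : nat, (j.+1%:R)^-1 < e.
Proof.
move=> e0; have [k hk] := ltr_add_invr e0.
by exists k; rewrite add0r in hk.
Qed.

Lemma open_nb (R : realType) (H : normedModType R) (y : H) (r : R) :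
  open [set z | `|z - y| < r].
Proof.
rewrite (_ : [set z | _] = ball y r); first exact: ball_open.
by apply/seteqP; split => z /=; rewrite -ball_normE /= distrC.
Qed.

Lemma open_ballsub (R : realType) (H : normedModType R) (A : set H) (b : H) :
  open A -> A b -> exists2 r : R, 0 < r & forall z, `|z - b| < r -> A z.
Proof.
move=> oA Ab; have : nbhs b A by apply: open_nbhs_nbhs.
move=> /nbhs_ballP [r r0 hr]; exists r => // z hz; apply: hr.
by rewrite -ball_normE /= distrC.
Qed.
Lemma open_of (R : realType) (H : normedModType R) (A : set H) :
  (forall y, A y -> exists2 e : R, 0 < e & forall z, `|z - y| < e -> A z) -> open A.
Proof.
move=> h; rewrite openE => y /h [e e0 he]; apply/nbhs_ballP; exists e => // z.
by rewrite -ball_normE /= distrC; apply: he.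
Qed.

Lemma dense_near (R : realType) (H : normedModType R) (D : set H) :
  dense D -> forall (y : H) (e : R), 0 < e -> exists q, D q /\ `|y - q| < e.
Proof.
move=> dD y e e0.
have [|z [hz Dz]] := dD [set z | `|z - y| < e] _ (open_nb y e).
  by exists y; rewrite /= subrr normr0.
by exists z; split => //; rewrite distrC.
Qed.

Lemma metric_eq (R : realType) (T : Type) (d : T -> T -> R) (Dt : set T) (t1 t2 : T) :
  is_metric d -> (forall x (e : R), 0 < e -> exists y, Dt y /\ d x y < e) ->
  (forall q, Dt q -> forall j : nat, d q t1 < j.+1%:R^-1 <-> d q t2 < j.+1%:R^-1) ->
  t1 = t2.
Proof.
move=> [d0 dE dC dT] hD h; case: (pselect (t1 = t2)) => // ne; exfalso.
have dpos : 0 < d t1 t2.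
  rewrite lt_def d0 andbT; apply/eqP => /dE; exact: ne.
have [j hj] := @exists_inv R (d t1 t2 / 2) (divr_gt0 dpos (ltr0Sn _ 1)).
have e0 : 0 < j.+1%:R^-1 :> R by rewrite invr_gt0 ltr0Sn.
have [q [Dq hq]] := hD t1 _ e0.
have hq' : d q t1 < j.+1%:R^-1 by rewrite dC.
have := (h q Dq j).1 hq'; have := dT t1 q t2.
set u := j.+1%:R^-1 in hj hq hq' *.
move=> h1 h2; clear hq'; move: hj hq h1 h2; move: (d t1 t2) (d t1 q) (d q t2) u.
move=> a b c v; lra.
Qed.
Section Chart.
Variables (R : realType) (X : Type) (MX OX : set (set X)).
Hypothesis hM : sigma_algebra setT MX.
Variables (f : nat -> X -> X) (g : X -> X).
Hypothesis hf : forall n, MT_measurable MX (f n).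
Hypothesis hconv : forall x, converges_to OX (fun n => f n x) (g x).
Hypothesis huniq : forall x l, converges_to OX (fun n => f n x) l -> l = g x.
Variable c : hilbert_chart R MX OX.

Local Notation H := (hc_H c).
Local Notation T := (hc_T c).
Local Notation ST := (hc_ST (h:=c)).
Local Notation U := (hc_U c).
Local Notation phi := (hc_phi c).
Local Notation psi := (hc_psi (h:=c)).
Local Notation B := (oball (hc_c c) (hc_r c)).

Lemma ST_sigma : sigma_algebra setT ST.
Proof. have [d [_ _ _ ->]] := hc_stdB c; exact: smallest_sigma_algebra. Qed.

Lemma ST_T : ST setT.
Proof. by have [h0 hC _] := ST_sigma; rewrite -(setD0 setT); apply: hC. Qed.

Lemma open_B : open B.
Proof. exact: open_nb. Qed.

Lemma gen_meas (O : set H) (S : set T) : open O -> O `<=` B -> ST S ->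
  model_meas B ST (O `*` S).
Proof.
move=> oO OB SS; apply: sub_gen_smallest; exists O; last by exists S.
by apply: sub_gen_smallest; split.
Qed.

Lemma basic n (O : set H) (S : set T) : open O -> ST S ->
  MX [set x | U (f n x) /\ O (phi (f n x)).1 /\ S (phi (f n x)).2].
Proof.
move=> oO SS.
have := hf n (hc_phi_meas (gen_meas (openI oO open_B) (@subIsetr _ O B) SS)).
apply: Mext => x /=; split.
  by move=> [Ux [[Ox _] Sx]].
move=> [Ux [Ox Sx]]; split => //; split => //; split => //.
by have [] := hc_phi_into Ux.
Qed.

Lemma model_open_nb (b : H) (e : R) (t : T) :
  model_open B [set p | `|p.1 - b| < e /\ B p.1 /\ p.2 = t].
Proof.
split; first by move=> p [_ [Bp _]].
move=> p [h1 [h2 h3]]; exists ([set z | `|z - b| < e] `&` B); split => //.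
- exact: (openI (open_nb b e) open_B).
- by move=> y [hy1 hy2].
Qed.

Lemma near_conv x : U (g x) -> forall e : R, 0 < e -> exists N, forall n, (N <= n)%N ->
  U (f n x) /\ `|(phi (f n x)).1 - (phi (g x)).1| < e /\ (phi (f n x)).2 = (phi (g x)).2.
Proof.
move=> Ug e e0.
have oW := hc_phi_cont (model_open_nb (phi (g x)).1 e (phi (g x)).2).
have [|N hN] := hconv (x:=x) oW.
  split => //; split; first by rewrite subrr normr0.
  by split => //; have [] := hc_phi_into Ug.
by exists N => n /hN [Uf [h1 [_ h2]]].
Qed.

Lemma Ak_open (A : set H) (k : nat) :
  open [set y | exists r : R, k.+1%:R^-1 < r /\ forall z, `|z - y| < r -> A z].
Proof.
apply: open_of => y [r [hr hA]]; exists (r - k.+1%:R^-1); first by rewrite subr_gt0.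
move=> z hz; exists (r - `|z - y|); split; first by rewrite ltrBrDl addrC -ltrBrDl.
move=> w hw; apply: hA.
rewrite (_ : w - y = (w - z) + (z - y)); last by rewrite addrA subrK.
by apply: (le_lt_trans (ler_normD _ _)); rewrite -ltrBrDr.
Qed.
Lemma MUn n : MX [set x | U (f n x)].
Proof.
apply: Mext (basic n openT ST_T) => x /=; split; first by case.
by move=> ?; split.
Qed.

Lemma core (A : set H) (S : set T) : open A -> A `<=` B -> ST S ->
  MX (g @^-1` (U `&` phi @^-1` (A `*` S))).
Proof.
move=> oA AB SS.
have [Dh [cDh dDh]] := hc_sep c.
have dnear := dense_near dDh.
have [d [dm dcomp [Dt [cDt dDt]] STe]] := hc_stdB c.
have ball_ST : forall q (r : R), ST [set t | d q t < r].
  move=> q r; rewrite STe; apply: sub_gen_smallest => t ht.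
  exists (r - d q t); first by rewrite subr_gt0.
  move=> y hy; have [_ _ _ dT] := dm; have := dT q t y; rewrite /= in ht hy *.
  move: hy ht; move: (d q t) (d t y) (d q y) => a b0 c0 /=; lra.
pose Ak k := [set y : H | exists r : R, k.+1%:R^-1 < r /\ forall z, `|z - y| < r -> A z].
have Meq : forall n N, MX [set x | U (f n x) /\ U (f N x) /\
                                   (phi (f n x)).2 = (phi (f N x)).2].
  move=> n N.
  apply: (Mext (P := [set x | U (f n x) /\ U (f N x) /\ forall q, Dt q ->
     forall j : nat,
     ((U (f n x) /\ setT (phi (f n x)).1 /\ [set t | d q t < j.+1%:R^-1] (phi (f n x)).2) <->
      (U (f N x) /\ setT (phi (f N x)).1 /\ [set t | d q t < j.+1%:R^-1] (phi (f N x)).2))])).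
    move=> x /=; split.
      move=> [Un [UN h]]; split => //; split => //.
      apply: (metric_eq dm dDt) => q Dq j; have := h q Dq j; tauto.
    move=> [Un [UN ->]]; split => //; split => // q _ j; tauto.
  eapply (MAnd hM); first exact: MUn.
  eapply (MAnd hM); first exact: MUn.
  eapply (MallD hM) => // q Dq; eapply (Mall hM) => j.
  by eapply (Miff hM); apply: basic => //; exact: openT.
apply: (Mext (P :=
  [set x | exists N, forall n, (N <= n)%N ->
     (U (f n x) /\ U (f N x) /\ (phi (f n x)).2 = (phi (f N x)).2) /\
     (U (f N x) /\ setT (phi (f N x)).1 /\ S (phi (f N x)).2)] `&`
  [set x | forall k : nat, exists q, Dh q /\ exists N, forall n, (N <= n)%N ->
     U (f n x) /\ [set z | `|z - q| < k.+1%:R^-1] (phi (f n x)).1 /\ setT (phi (f n x)).2] `&`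
  [set x | exists k : nat, exists N, forall n, (N <= n)%N ->
     U (f n x) /\ Ak k (phi (f n x)).1 /\ setT (phi (f n x)).2])); last first.
  eapply (MI2 hM); first eapply (MI2 hM).
  - eapply (Mev hM) => N n; eapply (MAnd hM); first exact: Meq.
    exact: basic openT SS.
  - eapply (Mall hM) => k; eapply (MexD hM) => // q Dq; eapply (Mev hM) => N n.
    exact: basic (open_nb q _) ST_T.
  - eapply (Mex hM) => k; eapply (Mev hM) => N n.
    exact: basic (Ak_open A k) ST_T.
move=> x; split.
  move=> [[[N1 h1] h2] [k [N3 h3]]].
  have [[UN1 _] [_ [_ St]]] := h1 N1 (leqnn N1).
  have [b hb] : exists b, forall e : R, 0 < e -> exists N, forall n, (N <= n)%N ->
      `|b - (phi (f n x)).1| < e.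
    apply: complete_seq => e e0; have [j hj] := exists_inv e0.
    have [q [Dq [N hN]]] := h2 j; exists q, N => n /hN [_ [hq _]].
    by rewrite distrC; apply: lt_trans hj; apply: hq.
  have Ab : A b.
    have e0 : 0 < k.+1%:R^-1 :> R by rewrite invr_gt0 ltr0Sn.
    have [Nb hNb] := hb _ e0.
    have [_ [[r [hr hA]] _]] := h3 (maxn N3 Nb) (leq_maxl _ _).
    apply: hA; have := hNb (maxn N3 Nb) (leq_maxr _ _).
    by rewrite distrC => hh; apply: lt_trans hh hr.
  pose p := (b, (phi (f N1 x)).2).
  have Dp : (B `*` setT) p by split => //; apply: AB.
  have cz : converges_to OX (fun n => f n x) (psi p).
    move=> O oO Oz; have [_ hW] := hc_psi_cont c oO.
    have [O' [oO' O'b _ hO']] := hW p (conj Dp Oz).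
    have [e e0 he] := open_ballsub oO' O'b.
    have [Nb hNb] := hb e e0.
    exists (maxn N1 Nb) => n hn.
    have [[Un [_ htn]] _] := h1 n (leq_trans (leq_maxl _ _) hn).
    have := hNb n (leq_trans (leq_maxr _ _) hn); rewrite distrC => hbn.
    have [_ hO] := hO' _ (he _ hbn).
    by move: hO; rewrite /= -htn -surjective_pairing (hc_psiK Un).
  have gz := huniq cz.
  rewrite /preimage /= -gz (hc_phiK Dp); split; first exact: hc_psi_into.
  by split.
move=> [Ug [Ab St]].
split; first split.
- have [N hN] := near_conv Ug (@ltr01 R).
  exists N => n Nn; have [Un [_ htn]] := hN n Nn; have [UN [_ htN]] := hN N (leqnn N).
  by rewrite htn htN.
- move=> k; have e0 : 0 < k.+1%:R^-1 / 2 :> R.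
    by rewrite divr_gt0 // invr_gt0 ltr0Sn.
  have [q [Dq hq]] := dnear (phi (g x)).1 _ e0.
  exists q; split => //.
  have [N hN] := near_conv Ug e0.
  exists N => n /hN [Un [hbn _]]; split => //; split => //=.
  have := ler_distD (phi (g x)).1 (phi (f n x)).1 q.
  move: hbn hq; move: (k.+1%:R^-1) `|_ - _| `|_ - _| `|_ - _| => a u v w; lra.
- have [r r0 hr] := open_ballsub oA Ab.
  have [k hk] := exists_inv (divr_gt0 r0 (ltr0Sn _ 1)).
  exists k.
  have e0 : 0 < k.+1%:R^-1 :> R by rewrite invr_gt0 ltr0Sn.
  have [N hN] := near_conv Ug e0.
  exists N => n /hN [Un [hbn _]]; split => //; split => //.
  exists (r - k.+1%:R^-1); split.
    by move: hk; move: (k.+1%:R^-1) => a; lra.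
  move=> z hz; apply: hr.
  have := ler_distD (phi (f n x)).1 z (phi (g x)).1.
  move: hz hbn; move: (k.+1%:R^-1) `|_ - _| `|_ - _| `|_ - _| => a u v w; lra.
Qed.

Lemma borel_meas (S : set T) : ST S -> forall A, borel_on B A ->
  MX (g @^-1` (U `&` phi @^-1` (A `*` S))).
Proof.
move=> SS; apply: (smallest_sub (X := [set A | MX (g @^-1` (U `&` phi @^-1` (A `*` S)))])).
  split.
  - rewrite /=; apply: Mext (M0 hM) => x; split => //=.
    by move=> [_ [[]]].
  - move=> A hA /=; apply: Mext (MD hM (core open_B (@subset_refl _ B) SS) hA) => x; split.
      move=> [[Ug [Bb Sb]] nA]; split => //; split => //; split => // Ab.
      by apply: nA; split.
    move=> [Ug [[Bb nAb] Sb]]; split; first by [].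
    by move=> [_ [Ab _]]; apply: nAb.
  - move=> F hF /=; apply: Mext (MU hM hF) => x; split.
      by move=> [n _ [Ug [Fb Sb]]]; split => //; split => //; exists n.
    by move=> [Ug [[n _ Fb] Sb]]; exists n.
by move=> A [oA AB]; exact: core oA AB SS.
Qed.

Lemma MgU : MX (g @^-1` U).
Proof.
apply: Mext (core open_B (@subset_refl _ B) ST_T) => x; split; first by case.
by move=> Ug; split => //; have [] := hc_phi_into Ug.
Qed.

Lemma model_meas_pre W : model_meas B ST W -> MX (g @^-1` (U `&` phi @^-1` W)).
Proof.
move: W; apply: (smallest_sub (X := [set W | MX (g @^-1` (U `&` phi @^-1` W))])).
  split.
  - rewrite /=; apply: Mext (M0 hM) => x; split => //=.
    by move=> [_ []].
  - move=> W hW /=; apply: Mext (MD hM MgU hW) => x; split.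
      move=> [Ug nW]; split => //; split; first exact: hc_phi_into.
      by move=> hw; apply: nW; split.
    move=> [Ug [Dp nW]]; split; first by [].
    by move=> [_ hw]; apply: nW.
  - move=> F hF /=; apply: Mext (MU hM hF) => x; split.
      by move=> [n _ [Ug Fb]]; split => //; exists n.
    by move=> [Ug [n _ Fb]]; exists n.
by move=> _ [A hA [S hS <-]]; exact: borel_meas hS A hA.
Qed.
End Chart.

Theorem mainTheorem14 (R : realType) (X : Type) (MX OX : set (set X))
  (f : nat -> X -> X) (g : X -> X) :
  measurable_hilbert_lamination R MX OX ->
  (forall n, MT_map MX OX (f n)) ->
  (forall x, exists! l, converges_to OX (fun n => f n x) l) ->
  (forall x, converges_to OX (fun n => f n x) (g x)) ->
  MT_measurable MX g.
Proof.
move=> [[hM _] [ch hcov]] hfm huniq' hconv.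
have hf : forall n, MT_measurable MX (f n) by move=> n; case: (hfm n).
have huniq : forall x l, converges_to OX (fun n => f n x) l -> l = g x.
  move=> x l hl; have [l0 [_ h]] := huniq' x.
  by rewrite -(h _ hl) (h _ (hconv x)).
move=> A hA.
apply: (Mext (P := \bigcup_i g @^-1` (hc_U (ch i) `&` hc_phi (ch i) @^-1`
   ((oball (hc_c (ch i)) (hc_r (ch i)) `*` setT) `&` hc_psi (h:=ch i) @^-1` A)))).
  move=> x; split.
    by move=> [i _ [Ug [Dp hA']]]; move: hA'; rewrite /= hc_psiK.
  move=> Ag; have [i hi] := hcov (g x); exists i => //; split => //; split.
    exact: hc_phi_into.
  by rewrite /= hc_psiK.
eapply (MU hM) => i.
exact: (model_meas_pre hM hf hconv huniq (hc_psi_meas hA)).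
Qed.
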